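(* Let $G=\Box_{i=1}^{l}G_i$ be a Cartesian product of stars $G_1,\dots,G_l$, where the vertices of each $G_i$ are labelled $0,1,\dots,|V(G_i)|-1$ with $0$ the star-center of $G_i$, and let $v_G$ be the vertex with coordinates $(0,\dots,0)$. Then for every integer $k\geq 0$, the induced subgraph $\langle N_k^G[v_G]\rangle$ is an isometric subgraph of $G$.
   Context: A star is a connected acyclic graph on vertex set $V$ having a vertex (its star-center) of degree $|V|-1$, all other vertices having degree $1$. The Cartesian product $G\Box H$ has vertex set $V(G)\times V(H)$, with $(g_1,h_1)$ adjacent to $(g_2,h_2)$ iff either $(g_1,g_2)\in E(G)$ and $h_1=h_2$, or $(h_1,h_2)\in E(H)$ and $g_1=g_2$; vertices of $\Box_{i}G_i$ are written as coordinate vectors. $N_k^G[v]=\{x\in V(G): d_G(v,x)\le k\}$ and $\langle N_k^G[v]\rangle$ is the subgraph it induces. A subgraph $H\subseteq G$ is isometric if $d_H(x,y)=d_G(x,y)$ for all $x,y\in V(H)$. *)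

(* Defs.v *)
From HB Require Import structures.
From mathcomp Require Import all_boot.
Set Implicit Arguments. Unset Strict Implicit. Unset Printing Implicit Defensive.

(* A (simple, finite) graph is given by its vertex finType and a symmetric
   irreflexive adjacency relation [e : rel T]. *)

Definition walkb (T : finType) (e : rel T) (x y : T) (k : nat) : bool :=
  [exists p : k.-tuple T, path e x p && (last x p == y)].

(* Graph distance d_e(x,y); [None] encodes infinity (x, y disconnected).
   Shortest walks are paths, hence have fewer than #|T| edges, so searching
   lengths 0 .. #|T|-1 finds the minimum when it exists. *)
Definition gdist (T : finType) (e : rel T) (x y : T) : option nat :=
  if has (walkb e x y) (iota 0 #|T|) then Some (find (walkb e x y) (iota 0 #|T|))
  else None.

Definition nbhd (T : finType) (e : rel T) (v : T) (k : nat) : {set T} :=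
  [set x | if gdist e v x is Some d then d <= k else false].

Definition induced (T : finType) (e : rel T) (S : {set T}) : rel T :=
  fun a b => [&& a \in S, b \in S & e a b].

Definition isometric_induced (T : finType) (e : rel T) (S : {set T}) : Prop :=
  forall x y, x \in S -> y \in S -> gdist (induced e S) x y = gdist e x y.

Definition star_rel (m : nat) : rel 'I_m.+1 :=
  fun a b => (a != b) && ((val a == 0) || (val b == 0)).

Definition cart_rel (l : nat) (V : 'I_l -> finType) (E : forall i, rel (V i))
  : rel {dffun forall i : 'I_l, V i} :=
  fun x y => [exists i, E i (x i) (y i) && [forall j, (j != i) ==> (x j == y j)]].

Definition star_prod_rel (l : nat) (n : 'I_l -> nat) : rel {dffun forall i : 'I_l, 'I_(n i).+1} :=
  @cart_rel l (fun i => 'I_(n i).+1) (fun i => @star_rel (n i)).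

Definition star_prod_center (l : nat) (n : 'I_l -> nat)
  : {dffun forall i : 'I_l, 'I_(n i).+1} := [ffun i => ord0].
Arguments star_prod_rel : clear implicits.
Arguments star_prod_center : clear implicits.

(* Main.v *)
Require Import Defs.
From mathcomp Require Import all_boot.
From mathcomp Require Import zify.
Set Implicit Arguments. Unset Strict Implicit. Unset Printing Implicit Defensive.

Section Gen.
Variables (T : finType) (e : rel T).

Lemma walkbP x y k : reflect (exists p : seq T, [/\ size p = k, path e x p & last x p = y])
  (walkb e x y k).
Proof.
apply: (iffP existsP) => [[p /andP[hp /eqP hl]] | [p [hs hp hl]]].
  by exists (val p); split => //; exact: size_tuple.
have hs' : size p == k by apply/eqP.
by exists (Tuple hs'); rewrite /= hp hl eqxx.
Qed.

Lemma walk_short x y k : walkb e x y k -> exists2 k', k' < #|T| & walkb e x y k'.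
Proof.
case/walkbP => p [_ hp]; case: (shortenP hp) => p' hp' hu _ hl.
exists (size p').
  move/card_uniqP: hu => hu; have := max_card (mem (x :: p')); rewrite hu /=; lia.
by apply/walkbP; exists p'; split.
Qed.

Lemma gdist_char x y d : walkb e x y d -> (forall m, walkb e x y m -> d <= m) ->
  gdist e x y = Some d.
Proof.
move=> hw hmin; have [d' hd' hw'] := walk_short hw.
have hdT : d < #|T| by have := hmin _ hw'; lia.
have hhas : has (walkb e x y) (iota 0 #|T|).
  by apply/hasP; exists d => //; rewrite mem_iota; lia.
rewrite /gdist hhas; congr Some.
have hj : find (walkb e x y) (iota 0 #|T|) < #|T|.
  by rewrite -[X in _ < X](size_iota 0) -has_find.
have := nth_find 0 hhas; rewrite nth_iota // add0n => hwj.
have := hmin _ hwj.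
case: (ltnP d (find (walkb e x y) (iota 0 #|T|))) => hdj; last by lia.
by have := before_find 0 hdj; rewrite nth_iota ?add0n ?hw //; lia.
Qed.
End Gen.

Definition sd (m : nat) (a b : 'I_m.+1) : nat :=
  if val a == val b then 0 else if (val a == 0) || (val b == 0) then 1 else 2.

Lemma sd_edge m (a b c : 'I_m.+1) : star_rel a b -> sd a c <= (sd b c).+1.
Proof.
rewrite /star_rel /sd -val_eqE.
case: (val a =P val b); case: (val b =P val c); case: (val a =P val c);
case: (val a =P 0); case: (val b =P 0); case: (val c =P 0) => //=; lia.
Qed.

Lemma sdxx m (a : 'I_m.+1) : sd a a = 0.
Proof. by rewrite /sd eqxx. Qed.

Lemma sd0 m (a b : 'I_m.+1) : sd a b = 0 -> a = b.
Proof. rewrite /sd; case: eqP => [/val_inj // | _]; by case: ifP. Qed.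

Lemma sd_zero m (a b : 'I_m.+1) : val a != 0 -> a != b -> sd a b = (sd ord0 b).+1.
Proof.
rewrite /sd -val_eqE /=; case: (val a =P val b); case: (val a =P 0); case: (val b =P 0); case: (0 =P val b) => //=; lia.
Qed.

Lemma sd_one m (a b : 'I_m.+1) : val a == 0 -> a != b -> sd a b = 1.
Proof. by rewrite /sd -val_eqE => -> /negbTE ->. Qed.

Lemma sd_00 m (b : 'I_m.+1) : val b == 0 -> sd ord0 b = 0.
Proof. by rewrite /sd /= eq_sym => ->. Qed.

Section Star.
Variables (l : nat) (n : 'I_l -> nat).
Local Notation T := {dffun forall i : 'I_l, 'I_(n i).+1}.
Local Notation e := (star_prod_rel l n).
Local Notation c := (star_prod_center l n).

Definition D (x y : T) : nat := \sum_(i < l) sd (x i) (y i).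

Definition upd (x a : T) (i : 'I_l) : T := [ffun j : 'I_l => if j == i then a j else x j].

Lemma updE x a i j : upd x a i j = if j == i then a j else x j.
Proof. by rewrite ffunE. Qed.

Lemma D_split x y i : D x y = sd (x i) (y i) + \sum_(j < l | j != i) sd (x j) (y j).
Proof. by rewrite /D (bigD1 i). Qed.

Lemma D_upd x a y i : D (upd x a i) y = sd (a i) (y i) + \sum_(j < l | j != i) sd (x j) (y j).
Proof.
rewrite (D_split _ _ i) updE eqxx; congr addn.
by apply: eq_bigr => j /negbTE hj; rewrite updE hj.
Qed.

Lemma Dxx x : D x x = 0.
Proof. by rewrite /D big1 // => i _; rewrite sdxx. Qed.

Lemma D0 x y : D x y = 0 -> x = y.
Proof.
move=> h; apply/ffunP => i; apply: sd0.
by have := D_split x y i; rewrite h => /esym/eqP; rewrite addn_eq0 => /andP[/eqP].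
Qed.

Lemma D_edge x z y : e x z -> D x y <= (D z y).+1.
Proof.
case/existsP => i /andP[hs /forallP hr].
rewrite (D_split x y i) (D_split z y i).
have -> : \sum_(j < l | j != i) sd (x j) (y j) = \sum_(j < l | j != i) sd (z j) (y j).
  by apply: eq_bigr => j hj; have := hr j; rewrite hj => /eqP ->.
by rewrite -addSn leq_add2r; apply: sd_edge.
Qed.

Lemma D_lower x p : path e x p -> D x (last x p) <= size p.
Proof.
elim: p x => [|z p IH] x /=; first by rewrite Dxx.
case/andP => hxz hp; have := D_edge (last z p) hxz; have := IH _ hp; lia.
Qed.

Lemma upd_edge (x a : T) i : x i != a i -> (val (x i) == 0) || (val (a i) == 0) -> e x (upd x a i).
Proof.
move=> hne h0; apply/existsP; exists i; rewrite updE eqxx.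
rewrite /star_rel hne h0 /=; apply/forallP => j; apply/implyP => hj.
by rewrite updE (negbTE hj).
Qed.

Lemma walk_exists k y : D c y <= k -> forall d x, D x y = d -> D c x <= k ->
  exists p : seq T, [/\ size p = d,
    path (fun a b => [&& D c a <= k, D c b <= k & e a b]) x p & last x p = y].
Proof.
move=> hy; elim => [|d IH] x hd hx.
  by exists [::]; split => //=; exact: D0.
have [hex | hno] := boolP [exists i : 'I_l, (x i != y i) && (val (x i) != 0)].
  case/existsP: hex => i /andP[hi1 hi2].
  have hz : D (upd x c i) y = d.
    move: hd; rewrite D_upd (D_split x y i) /star_prod_center ffunE.
    rewrite (sd_zero hi2 hi1) addSn => -[] //.
  have hzc : D c (upd x c i) <= D c x.
    apply: leq_sum => j _; rewrite updE; case: ifP => _ //; by rewrite sdxx.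
  have [p [hs hp hl]] := IH _ hz (leq_trans hzc hx).
  exists (upd x c i :: p); split; [by rewrite /= hs | | by []]; rewrite /= hp hx (leq_trans hzc hx) /=.
  by rewrite andbT; apply: upd_edge; rewrite /star_prod_center ffunE //= orbT.
have hno' : forall j, x j != y j -> val (x j) == 0.
  move=> j hj; apply/negPn/negP => hj2; move/negP: hno; apply.
  by apply/existsP; exists j; rewrite hj hj2.
have [hex | hall] := boolP [exists i : 'I_l, x i != y i]; last first.
  have hxy : x = y.
    apply/ffunP => j; apply/eqP; move/negP: hall => hall.
    by apply/negPn/negP => hj; apply: hall; apply/existsP; exists j.
  by move: hd; rewrite hxy Dxx.
case/existsP: hex => i hi.
have hz : D (upd x y i) y = d.
  move: hd; rewrite D_upd (D_split x y i) sdxx (sd_one (hno' _ hi) hi) add1n => -[] //.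
have hzc : D c (upd x y i) <= D c y.
  apply: leq_sum => j _; rewrite updE; case: ifP => _ //.
  have [->|hj] := eqVneq (x j) (y j) => //.
  by rewrite /star_prod_center ffunE sd_00 // hno'.
have [p [hs hp hl]] := IH _ hz (leq_trans hzc hy).
exists (upd x y i :: p); split; [by rewrite /= hs | | by []]; rewrite /= hp hx (leq_trans hzc hy) /=.
by rewrite andbT; apply: upd_edge; rewrite // hno'.
Qed.
End Star.

Lemma distE (l : nat) (n : 'I_l -> nat) x y :
  gdist (star_prod_rel l n) x y = Some (D x y).
Proof.
apply: gdist_char.
  have [p [hs hp hl]] := walk_exists (leq_maxr (D (star_prod_center l n) x) _)
     (erefl (D x y)) (leq_maxl _ _).
  apply/walkbP; exists p; split => //.
  by apply: sub_path hp => a b /and3P[_ _ ->].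
by move=> m /walkbP [p [<- hp <-]]; exact: D_lower.
Qed.

Lemma nbhdE (l : nat) (n : 'I_l -> nat) x k :
  (x \in nbhd (star_prod_rel l n) (star_prod_center l n) k) = (D (star_prod_center l n) x <= k).
Proof. by rewrite inE distE. Qed.

Theorem lemma3p6 (l : nat) (n : 'I_l -> nat) (k : nat) :
  isometric_induced (star_prod_rel l n)
    (nbhd (star_prod_rel l n) (star_prod_center l n) k).
Proof.
move=> x y hx hy; rewrite distE; apply: gdist_char.
  rewrite !nbhdE in hx hy.
  have [p [hs hp hl]] := walk_exists hy (erefl (D x y)) hx.
  apply/walkbP; exists p; split => //.
  apply: sub_path hp => a b /and3P[ha hb hab].
  by rewrite /induced !nbhdE ha hb hab.
move=> m /walkbP [p [<- hp <-]]; apply: D_lower.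
by apply: sub_path hp => a b /and3P[_ _ ->].
Qed.
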